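(* Let $\omega$ be a weight on a countable group $G$, and let $\mu$ be a probability measure on $G$ with finite first $\log\omega$-moment. Then: (i) $\mathrm{Ly}_\omega(G,\mu)\ge 0$; (ii) if $\tilde\omega$ is a weight on $G$ equivalent to $\omega$, then $\mathrm{Ly}_{\tilde\omega}(G,\mu)=\mathrm{Ly}_\omega(G,\mu)$; (iii) if $G$ is finitely generated with finite symmetric generating set $S$ containing $e$ and $\mu$ has finite first moment with respect to the word length $|\cdot|_S$, then the Lyapunov exponent of $\mu$ with respect to $\omega$ exists and \[ \mathrm{Ly}_\omega(G,\mu)\le(\log\omega_S)\,l(G,\mu). \]
   Context: A weight on $G$ is $\omega:G\to[a,\infty)$, $a>0$, with $\omega(st)\le C\omega(s)\omega(t)$ for some $C>0$ and all $s,t$. Two weights $\omega,\tilde\omega$ are equivalent if $c\,\omega\le\tilde\omega\le c'\omega$ for some $c,c'>0$. Finite first $\log\omega$-moment means $\sum_s\mu(s)\log\omega(s)<\infty$. The Lyapunov exponent is $\mathrm{Ly}_\omega(G,\mu)=\lim_{n\to\infty}\frac1n\sum_s\mu^{*n}(s)\log\omega(s)$, where $\mu^{*n}$ is the $n$-fold convolution power ($\mu*\nu(s)=\sum_t\mu(t)\nu(t^{-1}s)$). For finite symmetric generating $S\ni e$, the growth rate is $\omega_S=\lim_{n\to\infty}\sup_{s\in S^n}\omega(s)^{1/n}$; finite first moment means $\sum_s\mu(s)|s|_S<\infty$; the speed is $l(G,\mu)=\lim_{n\to\infty}\frac1n\sum_s\mu^{*n}(s)|s|_S$. *)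

(* Defs.v *)
From HB Require Import structures.
From mathcomp Require Import all_boot all_order all_algebra.
From mathcomp Require Import monoid.
From mathcomp Require Import all_classical all_reals all_analysis.

Set Implicit Arguments.
Unset Strict Implicit.
Unset Printing Implicit Defensive.
Import Order.TTheory GRing.Theory Num.Theory.
Import numFieldNormedType.Exports.

Local Open Scope classical_set_scope.
Local Open Scope ring_scope.

Section Defs.
Variables (R : realType) (G : groupType).

Definition countable_group : Prop := exists f : G -> nat, injective f.

Definition is_weight (w : G -> R) : Prop :=
  (exists a : R, 0 < a /\ forall s, a <= w s) /\
  (exists C : R, 0 < C /\ forall s t, w (s * t)%g <= C * w s * w t).

Definition equiv_weights (w w' : G -> R) : Prop :=
  exists c c' : R, 0 < c /\ 0 < c' /\ forall s, c * w s <= w' s /\ w' s <= c' * w s.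

Definition is_prob (mu : G -> R) : Prop :=
  (forall s, 0 <= mu s) /\ (\esum_(s in [set: G]) (mu s)%:E = 1)%E.

Definition conv (mu nu : G -> R) (s : G) : R :=
  fine (\esum_(t in [set: G]) (mu t * nu (t^-1 * s)%g)%:E)%E.

Definition dirac_e (s : G) : R := if s == 1%g then 1 else 0.

Fixpoint convpow (mu : G -> R) (n : nat) : G -> R :=
  match n with
  | 0%N => dirac_e
  | n'.+1 => conv (convpow mu n') mu
  end.

(* sum over G of a real function (as the difference of the sums of its
   positive and negative parts; meaningful for absolutely summable f) *)
Definition gsum (f : G -> R) : R :=
  fine (\esum_(s in [set: G]) (Num.max (f s) 0)%:E)%E
  - fine (\esum_(s in [set: G]) (Num.max (- f s) 0)%:E)%E.

Definition finite_log_moment (w : G -> R) (mu : G -> R) : Prop :=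
  (\esum_(s in [set: G]) (mu s * `|ln (w s)|)%:E < +oo)%E.

Definition ly_seq (w : G -> R) (mu : G -> R) (n : nat) : R :=
  n%:R^-1 * gsum (fun s => convpow mu n s * ln (w s)).

Definition Ly (w : G -> R) (mu : G -> R) : R := limn (ly_seq w mu).

Definition in_pow (S : seq G) (n : nat) (s : G) : Prop :=
  exists l : seq G, [/\ size l = n, all (fun x => x \in S) l & foldr (fun x y => (x * y)%g) 1%g l = s].

Definition symmetric_gen_set (S : seq G) : Prop :=
  [/\ 1%g \in S, (forall x, x \in S -> x^-1%g \in S) & forall s, exists n, in_pow S n s].

Definition wordlen (S : seq G) (s : G) : nat :=
  match pselect (exists n, `[< in_pow S n s >]) with
  | left h => ex_minn h
  | right _ => 0%N
  end.

Definition growth_seq (w : G -> R) (S : seq G) (n : nat) : R :=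
  sup [set w s `^ (n%:R^-1) | s in [set s | in_pow S n s]].

Definition growth_rate (w : G -> R) (S : seq G) : R := limn (growth_seq w S).

Definition finite_first_moment (S : seq G) (mu : G -> R) : Prop :=
  (\esum_(s in [set: G]) (mu s * (wordlen S s)%:R)%:E < +oo)%E.

Definition speed_seq (S : seq G) (mu : G -> R) (n : nat) : R :=
  n%:R^-1 * fine (\esum_(s in [set: G]) (convpow mu n s * (wordlen S s)%:R)%:E)%E.

Definition speed (S : seq G) (mu : G -> R) : R := limn (speed_seq S mu).

End Defs.

(* Main.v *)
Require Import Defs.
From HB Require Import structures.
From mathcomp Require Import all_boot all_order all_algebra.
From mathcomp Require Import monoid.
From mathcomp Require Import all_classical all_reals all_analysis.
From mathcomp Require Import lra.
Import Order.TTheory GRing.Theory Num.Theory.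
Import numFieldNormedType.Exports.
Set Implicit Arguments.
Unset Strict Implicit.
Unset Printing Implicit Defensive.
Local Open Scope classical_set_scope.
Local Open Scope ring_scope.

Section EsumExtra.
Variable R : realType.
Local Open Scope ereal_scope.

Lemma esum_ge1 (T : choiceType) (I : set T) (a : T -> \bar R) i :
  I i -> 0 <= a i -> a i <= \esum_(j in I) a j.
Proof.
move=> Ii a0; apply: esum_ge; exists [set i].
  by split; [exact: finite_set1 | move=> x ->].
by rewrite fsbig_set1.
Qed.

Lemma esumZl (T : choiceType) (I : set T) (c : \bar R) (a : T -> \bar R) :
  0 <= c -> (forall i, 0 <= a i) ->
  \esum_(i in I) (c * a i) = c * \esum_(i in I) a i.
Proof.
case: c => [r| |] // hc a0.
- rewrite lee_fin in hc; rewrite /esum -ereal_supZl //; last first.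
    apply/set0P; exists 0; exists set0; first by split => //.
    by rewrite fsbig_set0.
  congr ereal_sup; apply/seteqP; split => x /=.
  + move=> [A [finA AI] <-]; exists (\sum_(i \in A) a i); first by exists A.
    by rewrite !fsbig_finite // ge0_sume_distrr.
  + move=> [y [A [finA AI] <-] <-]; exists A => //.
    by rewrite !fsbig_finite // ge0_sume_distrr.
- case: (pselect (exists i, I i /\ 0 < a i)) => [[i [Ii ai]]|na].
  + have h1 : 0 < \esum_(j in I) a j by apply: lt_le_trans ai (esum_ge1 Ii (a0 i)).
    rewrite gt0_mulye //; apply/eqP; rewrite eq_le leey /=.
    have := esum_ge1 (a := fun i => +oo * a i) Ii (mule_ge0 hc (a0 i)).
    by rewrite gt0_mulye.
  + have az : forall i, I i -> a i = 0.
      move=> i Ii; apply/eqP; rewrite eq_le a0 andbT leNgt; apply/negP => h.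
      by apply: na; exists i.
    rewrite (esum1 az) mule0 esum1 // => i Ii; by rewrite az // mule0.
Qed.

Lemma esum_swap (T1 T2 : choiceType) (F : T1 -> T2 -> \bar R) :
  (forall i j, 0 <= F i j) ->
  \esum_(i in [set: T1]) \esum_(j in [set: T2]) F i j =
  \esum_(j in [set: T2]) \esum_(i in [set: T1]) F i j.
Proof.
move=> F0.
rewrite (esum_esum (a := F)); last by move=> i j _ _; exact: F0.
rewrite (esum_esum (a := fun j i => F i j)); last by move=> i j _ _; exact: F0.
have e1 : [set: T1] `*`` (fun _ => [set: T2]) = [set: T1 * T2].
  by apply/seteqP; split => x //=.
have e2 : [set: T2] `*`` (fun _ => [set: T1]) = [set: T2 * T1].
  by apply/seteqP; split => x //=.
rewrite e1 e2 (@reindex_esum _ _ _ [set: T2 * T1] [set: T1 * T2] (fun x => (x.2, x.1))) //.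
rewrite setTT_bijective; exists (fun x => (x.2, x.1)); by case.
Qed.

End EsumExtra.

Section Conv.
Variables (R : realType) (G : groupType).
Local Open Scope ereal_scope.

Definition P (nu : G -> R) (f : G -> \bar R) : \bar R :=
  \esum_(s in [set: G]) (nu s)%:E * f s.

Lemma prob_le1 (nu : G -> R) : is_prob nu -> forall s, (nu s <= 1)%R.
Proof.
move=> [nu0 nu1] s; rewrite -lee_fin -nu1.
by apply: (esum_ge1 (a := fun s => (nu s)%:E)) => //; rewrite lee_fin.
Qed.

Lemma P_ge0 nu f : (forall s, (0 <= nu s)%R) -> (forall s, 0 <= f s) -> 0 <= P nu f.
Proof. by move=> nu0 f0; apply: esum_ge0 => s _; apply: mule_ge0 => //; rewrite lee_fin. Qed.

Lemma P_le nu f g : (forall s, (0 <= nu s)%R) -> (forall s, f s <= g s) -> P nu f <= P nu g.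
Proof. by move=> nu0 fg; apply: le_esum => s _; apply: lee_wpmul2l => //; rewrite lee_fin. Qed.

Lemma P_add nu f g : (forall s, (0 <= nu s)%R) -> (forall s, 0 <= f s) -> (forall s, 0 <= g s) ->
  P nu (fun s => f s + g s) = P nu f + P nu g.
Proof.
move=> nu0 f0 g0; rewrite /P -esumD; last by move=> s _; apply: mule_ge0 => //; rewrite lee_fin.
  by apply: eq_esum => s _; rewrite ge0_muleDr.
by move=> s _; apply: mule_ge0 => //; rewrite lee_fin.
Qed.

Lemma P_scale nu c f : (forall s, (0 <= nu s)%R) -> 0 <= c -> (forall s, 0 <= f s) ->
  P nu (fun s => c * f s) = c * P nu f.
Proof.
move=> nu0 c0 f0; rewrite /P -esumZl //; last by move=> s; apply: mule_ge0 => //; rewrite lee_fin.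
by apply: eq_esum => s _; rewrite muleCA.
Qed.

Lemma P_cst nu c : is_prob nu -> 0 <= c -> P nu (fun _ => c) = c.
Proof.
move=> [nu0 nu1] c0; rewrite /P.
under eq_esum do rewrite muleC.
by rewrite esumZl // nu1 mule1.
Qed.

Lemma P_dirac f : (forall s, 0 <= f s) -> P (@dirac_e R G) f = f 1%g.
Proof.
move=> f0; rewrite /P (esumID [set 1%g]); last by move=> s _; apply: mule_ge0 => //; rewrite /dirac_e; case: ifP.
rewrite setTI esum_set1; last by rewrite /dirac_e eqxx mul1e.
rewrite /dirac_e eqxx mul1e esum1 ?adde0 // => s [_ /= hs].
by rewrite ifN ?mul0e //; apply/eqP.
Qed.

Lemma dirac_prob : is_prob (@dirac_e R G).
Proof.
split; first by move=> s; rewrite /dirac_e; case: ifP.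
have := P_dirac (f := fun _ => 1) (fun _ => lee01).
by rewrite /P; under eq_esum do rewrite mule1.
Qed.

Lemma conv_E (nu mu : G -> R) : is_prob nu -> is_prob mu -> forall s,
  (Defs.conv nu mu s)%:E = \esum_(t in [set: G]) (nu t * mu (t^-1 * s)%g)%:E.
Proof.
move=> hnu hmu s; rewrite /Defs.conv fineK // ge0_fin_numE; last first.
  by apply: esum_ge0 => t _; rewrite lee_fin mulr_ge0 //; [apply: hnu.1|apply: hmu.1].
apply: (le_lt_trans (y := \esum_(t in [set: G]) (nu t)%:E)).
  apply: le_esum => t _; rewrite lee_fin ler_piMr //; [exact: hnu.1 _ | exact: (prob_le1 hmu)].
suff -> : \esum_(t in [set: G]) (nu t)%:E = 1 by rewrite ltry.
exact: (proj2 hnu).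
Qed.

Lemma P_conv (nu mu : G -> R) (f : G -> \bar R) : is_prob nu -> is_prob mu -> (forall s, 0 <= f s) ->
  P (Defs.conv nu mu) f = P nu (fun t => P mu (fun z => f (t * z)%g)).
Proof.
move=> hnu hmu f0; rewrite /P.
have nu0 := hnu.1; have mu0 := hmu.1.
transitivity (\esum_(s in [set: G]) \esum_(t in [set: G])
   ((nu t * mu (t^-1 * s)%g)%:E * f s)).
  apply: eq_esum => s _; rewrite conv_E // muleC -esumZl //.
    by apply: eq_esum => t _; rewrite muleC.
  by move=> t; rewrite lee_fin mulr_ge0.
rewrite esum_swap; last by move=> s t; apply: mule_ge0 => //; rewrite lee_fin mulr_ge0.
apply: eq_esum => t _.
rewrite [LHS](@reindex_esum _ _ _ [set: G] [set: G] (fun z => (t * z)%g)); last first.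
  rewrite setTT_bijective; exists (fun s => (t^-1 * s)%g) => z /=; [exact: mulKg|exact: mulVKg].
rewrite -esumZl //; last by move=> z; apply: mule_ge0 => //; rewrite lee_fin.
by apply: eq_esum => z _; rewrite mulKg EFinM muleA.
by rewrite lee_fin.
Qed.

Lemma conv_prob (nu mu : G -> R) : is_prob nu -> is_prob mu -> is_prob (Defs.conv nu mu).
Proof.
move=> hnu hmu; split.
  by move=> s; rewrite /Defs.conv fine_ge0 // esum_ge0 // => t _; rewrite lee_fin mulr_ge0 //; [apply: hnu.1|apply: hmu.1].
have h := P_conv (f := fun _ => 1) hnu hmu (fun _ => lee01).
have e : (fun t : G => P mu (fun _ => 1)) = (fun _ => 1).
  by apply: funext => t; apply: P_cst.
rewrite e (P_cst hnu) // in h.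
by rewrite -h /P; apply: eq_esum => s _; rewrite mule1.
Qed.

End Conv.

Section Pow.
Variables (R : realType) (G : groupType) (mu : G -> R).
Hypothesis hmu : is_prob mu.
Local Open Scope ereal_scope.

Definition Pn n (f : G -> \bar R) := P (convpow mu n) f.

Lemma convpow_prob n : is_prob (convpow mu n).
Proof. elim: n => [|n IH] /=; [exact: dirac_prob | exact: conv_prob]. Qed.

Lemma convpow_ge0 n s : (0 <= convpow mu n s)%R.
Proof. exact: (convpow_prob n).1. Qed.

Lemma Pn_ge0 n f : (forall s, 0 <= f s) -> 0 <= Pn n f.
Proof. by move=> f0; apply: P_ge0 => // s; exact: convpow_ge0. Qed.

Lemma Pn0 f : (forall s, 0 <= f s) -> Pn 0 f = f 1%g.
Proof. exact: P_dirac. Qed.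

Lemma PnS n f : (forall s, 0 <= f s) ->
  Pn n.+1 f = Pn n (fun t => P mu (fun z => f (t * z)%g)).
Proof. by move=> f0; rewrite /Pn /= P_conv //; exact: convpow_prob. Qed.

Lemma Pn1 f : (forall s, 0 <= f s) -> Pn 1 f = P mu f.
Proof.
move=> f0; rewrite PnS // Pn0; last by move=> t; apply: P_ge0 => //; exact: hmu.1.
by congr P; apply: funext => z; rewrite mul1g.
Qed.

Lemma Pn_add n m f : (forall s, 0 <= f s) ->
  Pn (n + m) f = Pn n (fun x => Pn m (fun y => f (x * y)%g)).
Proof.
elim: m f => [|m IH] f f0.
  rewrite addn0; congr Pn; apply: funext => x; rewrite Pn0 ?mulg1 //.
rewrite addnS PnS // IH; last by move=> t; apply: P_ge0 => //; exact: hmu.1.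
congr Pn; apply: funext => x; rewrite PnS //.
by congr Pn; apply: funext => t; congr P; apply: funext => z; rewrite mulgA.
Qed.

Lemma Pn_cst n c : 0 <= c -> Pn n (fun _ => c) = c.
Proof. by move=> c0; apply: P_cst => //; exact: convpow_prob. Qed.

Lemma Pn_le n f g : (forall s, f s <= g s) -> Pn n f <= Pn n g.
Proof. by move=> fg; apply: P_le => // s; exact: convpow_ge0. Qed.

Lemma Pn_subadd (h : G -> R) n m : (forall s, (0 <= h s)%R) ->
  (forall s t, (h (s * t)%g <= h s + h t)%R) ->
  Pn (n + m) (fun s => (h s)%:E) <= Pn n (fun s => (h s)%:E) + Pn m (fun s => (h s)%:E).
Proof.
move=> h0 hsub; rewrite Pn_add; last by move=> s; rewrite lee_fin.
apply: (@le_trans _ _ (Pn n (fun x => (h x)%:E + Pn m (fun s => (h s)%:E)))).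
  apply: Pn_le => x.
  rewrite -(Pn_cst m (c := (h x)%:E)); last by rewrite lee_fin.
  rewrite /Pn -P_add //; try (by move=> ?; rewrite lee_fin); try (by move=> ?; exact: convpow_ge0).
  by apply: P_le => [s|y]; [exact: convpow_ge0|rewrite -EFinD lee_fin].
rewrite /Pn P_add //; try (by move=> ?; rewrite lee_fin); try (by move=> ?; exact: convpow_ge0); try (by move=> ?; apply: Pn_ge0 => // ?; rewrite lee_fin).
rewrite (P_cst (convpow_prob n)) //; apply: Pn_ge0 => ?; by rewrite lee_fin.
Qed.

Lemma Pn_fin (h : G -> R) : (forall s, (0 <= h s)%R) ->
  (forall s t, (h (s * t)%g <= h s + h t)%R) ->
  P mu (fun s => (h s)%:E) < +oo -> forall n, Pn n (fun s => (h s)%:E) < +oo.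
Proof.
move=> h0 hsub h1; elim => [|n IH]; first by rewrite Pn0 ?ltry // => s; rewrite lee_fin.
rewrite -addn1; apply: le_lt_trans (Pn_subadd n 1 h0 hsub) _.
by rewrite lte_add_pinfty // Pn1 // => s; rewrite lee_fin.
Qed.

End Pow.

Section Fekete.
Variable R : realType.

Lemma cvg_divn0 (c : R) : (fun n : nat => c / n%:R) @ \oo --> 0.
Proof.
rewrite -cvg_shiftS.
have h := @cvgMl_tmp R nat \oo _ (@harmonic R) c 0 cvg_harmonic.
rewrite mulr0 in h.
have -> : [sequence c / n.+1%:R]_n = (fun n => c * harmonic n) by apply: funext => n /=.
exact: h.
Qed.

Lemma subadd_qk (u : nat -> R) k : (forall n m, u (n + m)%N <= u n + u m) ->
  forall q r, u (q * k + r)%N <= q%:R * u k + u r.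
Proof.
move=> hsub; elim => [|q IH] r; first by rewrite mul0n add0n mul0r add0r.
rewrite mulSn -addnA; apply: le_trans (hsub _ _) _.
by rewrite mulrSr; have := IH r; lra.
Qed.

Lemma subadd_lin (u : nat -> R) : (forall n, 0 <= u n) ->
  (forall n m, u (n + m)%N <= u n + u m) -> forall k, (0 < k)%N ->
  exists M, 0 <= M /\ forall j, u j <= j%:R * (u k / k%:R) + M.
Proof.
move=> u0 hsub k k0; exists (\sum_(r < k) u r); split.
  by apply: sumr_ge0 => r _.
move=> j; rewrite {1}(divn_eq j k); apply: le_trans (subadd_qk k hsub _ _) _.
apply: lerD.
  have hq : (j %/ k)%:R <= j%:R / k%:R :> R.
    rewrite ler_pdivlMr ?ltr0n // -natrM ler_nat.
    by rewrite [leqRHS](divn_eq j k) leq_addr.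
  apply: le_trans (ler_wpM2r (u0 k) hq) _.
  by rewrite [X in _ <= X]mulrCA mulrC.
have hr : (j %% k < k)%N by rewrite ltn_mod.
rewrite (bigD1 (Ordinal hr)) //= lerDl.
by apply: sumr_ge0 => r _.
Qed.

Lemma fekete (u : nat -> R) : (forall n, 0 <= u n) ->
  (forall n m, u (n + m)%N <= u n + u m) ->
  exists g, [/\ (fun n => u n / n%:R) @ \oo --> g,
     (forall k, (0 < k)%N -> g <= u k / k%:R) & 0 <= g].
Proof.
move=> u0 hsub.
pose E := [set u n / n%:R | n in [set n | (0 < n)%N]].
have En0 : E !=set0 by exists (u 1%N / 1%:R); exists 1%N.
have Elb : lbound E 0.
  by move=> _ [n _ <-]; rewrite divr_ge0.
have Ehl : has_lbound E by exists 0.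
have Ehi : has_inf E by split.
exists (inf E); split; last 2 first.
- by move=> k k0; apply: ge_inf => //; exists k.
- exact: lb_le_inf.
apply/cvgrPdist_lt => e e0.
have e20 : 0 < e / 2 by rewrite divr_gt0.
have [_ [k k0 <-] hk] := inf_adherent e20 Ehi.
have [M [M0 HM]] := subadd_lin u0 hsub k0.
near=> n.
have n0 : (0 < n)%N by near: n; exact: nbhs_infty_gt.
have nM : 2 * M / e < n%:R by near: n; exact: nbhs_infty_gtr.
have lo : inf E <= u n / n%:R by apply: ge_inf => //; exists n.
have npos : 0 < n%:R :> R by rewrite ltr0n.
have hi : u n / n%:R <= u k / k%:R + M / n%:R.
  rewrite ler_pdivrMr // mulrDl divfK ?gt_eqF // mulrC; exact: HM.
have Mn : M / n%:R < e / 2.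
  rewrite ltr_pdivrMr //; move: nM; rewrite ltr_pdivrMr //; nra.
rewrite ler0_norm; last by lra.
lra.
Unshelve. all: end_near.
Qed.

End Fekete.

Section Weight.
Variables (R : realType) (G : groupType).

Lemma weight_h (w : G -> R) : is_weight w -> exists K, exists h : G -> R,
  [/\ 0 <= K, (forall s, h s = ln (w s) + K), (forall s, 0 <= h s),
      (forall s t, h (s * t)%g <= h s + h t) & (forall s, 0 < w s)].
Proof.
move=> [[a [a0 ha]] [C [C0 hC]]].
have wpos s : 0 < w s := lt_le_trans a0 (ha s).
exists (`|ln C| + `|ln a|), (fun s => ln (w s) + (`|ln C| + `|ln a|)); split => //.
- move=> s; have h1 : ln a <= ln (w s) by rewrite ler_ln ?posrE.
  have h2 := ler_norm (- ln a); rewrite normrN in h2.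
  have h3 := normr_ge0 (ln C).
  lra.
- move=> s t.
  have h1 : ln (w (s * t)%g) <= ln (C * w s * w t).
    by rewrite ler_ln ?posrE ?mulr_gt0.
  rewrite (lnM (x := C * w s)) ?posrE ?mulr_gt0 // (lnM (x := C)) ?posrE // in h1.
  have h2 := ler_norm (ln C).
  have h3 := normr_ge0 (ln a).
  lra.
Qed.

Lemma max_id_helper (x : R) : x + Num.max (- x) 0 = Num.max x 0.
Proof.
have [hx|hx] := lerP 0 x.
  by rewrite (@max_r _ _ (- x)) ?(@max_l _ _ x) //; lra.
by rewrite (@max_l _ _ (- x)) ?(@max_r _ _ x) //; lra.
Qed.

Local Open Scope ereal_scope.

Lemma ly_seq_E (mu w : G -> R) K (h : G -> R) : is_prob mu -> finite_log_moment w mu ->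
  (forall s, (0 < w s)%R) -> (0 <= K)%R -> (forall s, h s = ln (w s) + K)%R ->
  (forall s, (0 <= h s)%R) -> (forall s t, (h (s * t)%g <= h s + h t)%R) ->
  forall n, Pn mu n (fun s => (h s)%:E) < +oo /\
    ly_seq w mu n = (n%:R^-1 * (fine (Pn mu n (fun s => (h s)%:E)) - K))%R.
Proof.
move=> hmu hm wpos K0 hE h0 hsub.
have mu0 := hmu.1.
have P1 : P mu (fun s => (h s)%:E) < +oo.
  apply: (@le_lt_trans _ _ (P mu (fun s => (`|ln (w s)|)%:E + K%:E))).
    apply: P_le => // s; rewrite -EFinD lee_fin hE lerD2r; exact: ler_norm.
  rewrite P_add //; try (by move=> ?; rewrite lee_fin).
  rewrite P_cst // ?lee_fin // lte_add_pinfty ?ltry //.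
have Pfin := Pn_fin hmu h0 hsub P1.
move=> n; split; first exact: Pfin.
have hp := convpow_prob hmu n.
rewrite /ly_seq /gsum; congr (_ * _)%R.
set L := fun s => ln (w s).
have eX : \esum_(s in [set: G]) (Num.max (convpow mu n s * ln (w s)) 0)%:E =
          Pn mu n (fun s => (Num.max (L s) 0)%:E).
  apply: eq_esum => s _; rewrite -EFinM maxr_pMr ?mulr0 //; exact: hp.1.
have eY : \esum_(s in [set: G]) (Num.max (- (convpow mu n s * ln (w s))) 0)%:E =
          Pn mu n (fun s => (Num.max (- L s) 0)%:E).
  apply: eq_esum => s _; rewrite -EFinM maxr_pMr ?mulr0 ?mulrN //; exact: hp.1.
rewrite eX eY.
have key : Pn mu n (fun s => (h s)%:E) + Pn mu n (fun s => (Num.max (- L s) 0)%:E) =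
           Pn mu n (fun s => (Num.max (L s) 0)%:E) + K%:E.
  rewrite /Pn -P_add; try (by move=> ?; rewrite lee_fin); try (by move=> ?; rewrite lee_fin le_max lexx orbT); try exact: hp.1.
  rewrite -(P_cst hp (c := K%:E)) ?lee_fin // -P_add; try (by move=> ?; rewrite lee_fin); try (by move=> ?; rewrite lee_fin le_max lexx orbT); try exact: hp.1.
  congr P; apply: funext => s; rewrite -!EFinD hE -max_id_helper /L; congr EFin; lra.
have hY : Pn mu n (fun s => (Num.max (- L s) 0)%:E) <= K%:E.
  rewrite -(Pn_cst hmu n (c := K%:E)) ?lee_fin //; apply: Pn_le => // s.
  rewrite lee_fin ge_max K0 andbT; have := h0 s; rewrite hE /L; lra.
have Y0 : 0 <= Pn mu n (fun s => (Num.max (- L s) 0)%:E).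
  by apply: Pn_ge0 => // s; rewrite lee_fin le_max lexx orbT.
have X0 : 0 <= Pn mu n (fun s => (Num.max (L s) 0)%:E).
  by apply: Pn_ge0 => // s; rewrite lee_fin le_max lexx orbT.
have H0 : 0 <= Pn mu n (fun s => (h s)%:E) by apply: Pn_ge0 => // s; rewrite lee_fin.
move: key hY Y0 X0 H0 (Pfin n).
set A := Pn mu n (fun s => (h s)%:E).
set Y := Pn mu n (fun s => (Num.max (- L s) 0)%:E).
set X := Pn mu n (fun s => (Num.max (L s) 0)%:E).
case: A => [a| |] //; case: Y => [y| |] //; case: X => [x| |] //= key hY Y0 X0 H0 _.
move: key; rewrite -!EFinD => -[key]; lra.
Qed.

End Weight.

Section Assembly.
Variables (R : realType) (G : groupType).

Lemma le_lim_aux (a b : nat -> R) x y c : a @ \oo --> x -> b @ \oo --> y ->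
  (forall n, a n <= b n + c / n%:R) -> x <= y.
Proof.
move=> ha hb hab.
have hb' : (fun n => b n + c / n%:R) @ \oo --> y.
  by rewrite -[y]addr0; apply: cvgD => //; exact: cvg_divn0.
rewrite -(cvg_lim _ ha) // -(cvg_lim _ hb') //.
apply: ler_lim; [exact: cvgP ha | exact: cvgP hb' | ].
by apply: nearW => n; exact: hab n.
Qed.

Lemma Pn_seq (mu : G -> R) (h : G -> R) : is_prob mu ->
  (forall s, 0 <= h s) -> (forall s t, h (s * t)%g <= h s + h t) ->
  (P mu (fun s => (h s)%:E) < +oo)%E ->
  exists g, [/\ (forall n, (fine (Pn mu n (fun s => (h s)%:E)))%:E = Pn mu n (fun s => (h s)%:E)),
     (fun n => fine (Pn mu n (fun s => (h s)%:E)) / n%:R) @ \oo --> g,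
     (forall k, (0 < k)%N -> g <= fine (Pn mu k (fun s => (h s)%:E)) / k%:R) & 0 <= g].
Proof.
move=> hmu h0 hsub P1.
have Pfin := Pn_fin hmu h0 hsub P1.
have P0 n : (0 <= Pn mu n (fun s => (h s)%:E))%E by apply: Pn_ge0 => // s; rewrite lee_fin.
have fE n : (fine (Pn mu n (fun s => (h s)%:E)))%:E = Pn mu n (fun s => (h s)%:E).
  by rewrite fineK // ge0_fin_numE.
have usub : forall n m, fine (Pn mu (n + m) (fun s => (h s)%:E)) <=
   fine (Pn mu n (fun s => (h s)%:E)) + fine (Pn mu m (fun s => (h s)%:E)).
  by move=> n m; rewrite -lee_fin EFinD !fE; exact: Pn_subadd.
have [g [hg1 hg2 hg3]] := @fekete R (fun n => fine (Pn mu n (fun s => (h s)%:E)))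
   (fun n => fine_ge0 (P0 n)) usub.
by exists g; split.
Qed.

Lemma Ly_main (mu w : G -> R) : is_prob mu -> is_weight w -> finite_log_moment w mu ->
  exists K, exists h : G -> R, exists g,
  [/\ 0 <= K, (forall s, h s = ln (w s) + K), (forall s, 0 <= h s),
      (forall s t, h (s * t)%g <= h s + h t) &
      [/\ (forall n, (fine (Pn mu n (fun s => (h s)%:E)))%:E = Pn mu n (fun s => (h s)%:E)),
      (fun n => fine (Pn mu n (fun s => (h s)%:E)) / n%:R) @ \oo --> g,
      ly_seq w mu @ \oo --> g & 0 <= g]].
Proof.
move=> hmu hw hm.
have [K [h [K0 hE h0 hsub wpos]]] := weight_h hw.
have hly := ly_seq_E hmu hm wpos K0 hE h0 hsub.
have P1 : (P mu (fun s => (h s)%:E) < +oo)%E.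
  rewrite -(Pn1 hmu); first exact: (hly 1%N).1.
  by move=> s; rewrite lee_fin.
have [g [fE hg _ g0]] := Pn_seq hmu h0 hsub P1.
exists K, h, g; split => //; split => //.
have -> : ly_seq w mu = (fun n => fine (Pn mu n (fun s => (h s)%:E)) / n%:R - K / n%:R).
  by apply: funext => n; rewrite (hly n).2 mulrBr !(mulrC n%:R^-1).
rewrite -[g]subr0; apply: cvgB => //; exact: cvg_divn0.
Qed.

End Assembly.

Section Words.
Variables (R : realType) (G : groupType).

Lemma foldr_mul1 (l : seq G) (x : G) :
  foldr (fun a b => (a * b)%g) x l = (foldr (fun a b => (a * b)%g) 1%g l * x)%g.
Proof. by elim: l => [|y l IH] /=; [rewrite mul1g | rewrite IH mulgA]. Qed.

Lemma in_pow_mul (S : seq G) k j s t : in_pow S k s -> in_pow S j t ->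
  in_pow S (k + j) (s * t)%g.
Proof.
move=> [l1 [h1 a1 e1]] [l2 [h2 a2 e2]]; exists (l1 ++ l2); split.
- by rewrite size_cat h1 h2.
- by rewrite all_cat a1 a2.
- by rewrite foldr_cat foldr_mul1 e1 e2.
Qed.

Lemma in_pow_split (S : seq G) k j s : in_pow S (k + j) s ->
  exists s1 s2, [/\ in_pow S k s1, in_pow S j s2 & s = (s1 * s2)%g].
Proof.
move=> [l [hl al el]].
exists (foldr (fun a b => (a * b)%g) 1%g (take k l)), (foldr (fun a b => (a * b)%g) 1%g (drop k l)).
have : all (fun x => x \in S) (take k l ++ drop k l) by rewrite cat_take_drop.
rewrite all_cat => /andP[at1 ad1].
split.
- exists (take k l); split => //; rewrite size_take hl.
  by case: ifP => // /negbT; rewrite -leqNgt => h; apply/eqP; rewrite eqn_leq h leq_addr.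
- by exists (drop k l); split => //; rewrite size_drop hl addKn.
- by rewrite -el -{1}(cat_take_drop k l) foldr_cat foldr_mul1.
Qed.

Lemma in_pow1 (S : seq G) k : (1%g \in S) -> in_pow S k 1%g.
Proof.
move=> h1; exists (nseq k 1%g); split.
- by rewrite size_nseq.
- by rewrite all_nseq h1 orbT.
- by elim: k => //= k ->; rewrite mul1g.
Qed.

Lemma wordlen_spec (S : seq G) s : (exists n, in_pow S n s) ->
  in_pow S (wordlen S s) s /\ forall n, in_pow S n s -> (wordlen S s <= n)%N.
Proof.
move=> hex; rewrite /wordlen; case: pselect => [h|nh].
  case: ex_minnP => m /asboolP hm hmin; split => // n hn; apply: hmin; exact/asboolP.
by exfalso; apply: nh; have [n hn] := hex; exists n; exact/asboolP.
Qed.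

Lemma wordlen_sub (S : seq G) : symmetric_gen_set S ->
  forall s t, (wordlen S (s * t)%g <= wordlen S s + wordlen S t)%N.
Proof.
move=> [_ _ hgen] s t.
have [hs _] := wordlen_spec (hgen s); have [ht _] := wordlen_spec (hgen t).
exact: (wordlen_spec (hgen (s * t)%g)).2 (in_pow_mul hs ht).
Qed.

End Words.

Section Growth.
Variables (R : realType) (G : groupType) (w : G -> R) (S : seq G) (a C : R).
Hypotheses (a0 : 0 < a) (ha : forall s, a <= w s) (C0 : 0 < C)
  (hC : forall s t, w (s * t)%g <= C * w s * w t) (h1S : 1%g \in S).

Let wpos s : 0 < w s := lt_le_trans a0 (ha s).

Let B := Num.max C 1 * (w 1%g + \sum_(x <- S) w x).

Let sum_ge0 : 0 <= \sum_(x <- S) w x.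
Proof. by apply: sumr_ge0 => x _; exact: ltW. Qed.

Let B_ge_w1 : w 1%g <= B.
Proof.
rewrite /B; apply: le_trans (_ : w 1%g + \sum_(x <- S) w x <= _).
  by rewrite lerDl.
rewrite ler_peMl //; first by rewrite addr_ge0 // ltW.
by rewrite le_max lexx orbT.
Qed.

Let B_ge0 : 0 <= B.
Proof. exact: le_trans (ltW (wpos 1%g)) B_ge_w1. Qed.

Let CwB x : x \in S -> C * w x <= B.
Proof.
move=> xS; rewrite /B; apply: ler_pM.
- exact: ltW.
- exact: ltW.
- by rewrite le_max lexx.
- rewrite (big_rem x) //=.
  have h1 := wpos 1%g.
  have h2 : 0 <= \sum_(y <- rem x S) w y by apply: sumr_ge0 => y _; exact: ltW.
  lra.
Qed.

Lemma w_bound_list (l : seq G) : all (fun x => x \in S) l ->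
  w (foldr (fun a b => (a * b)%g) 1%g l) <= B ^+ (size l).+1.
Proof.
elim: l => [|x l IH] /=; first by rewrite expr1.
move=> /andP[xS al]; apply: le_trans (hC _ _) _.
rewrite exprS; apply: ler_pM.
- by rewrite mulr_ge0 // ltW.
- exact: ltW.
- exact: CwB.
- exact: IH.
Qed.

Definition Mk k := sup [set w s | s in [set s | in_pow S k s]].

Lemma Mk_ne k : [set w s | s in [set s | in_pow S k s]] !=set0.
Proof. by exists (w 1%g); exists 1%g => //; exact: in_pow1. Qed.

Lemma Mk_hub k : has_ubound [set w s | s in [set s | in_pow S k s]].
Proof.
exists (B ^+ k.+1) => _ [s [l [hl al el]] <-].
by rewrite -el -hl; exact: w_bound_list.
Qed.

Lemma Mk_ub k s : in_pow S k s -> w s <= Mk k.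
Proof. by move=> hs; apply: ub_le_sup; [exact: Mk_hub | exists s]. Qed.

Lemma Mk_ge_a k : a <= Mk k.
Proof. exact: le_trans (ha 1%g) (Mk_ub (in_pow1 k h1S)). Qed.

Lemma Mk_gt0 k : 0 < Mk k.
Proof. exact: lt_le_trans a0 (Mk_ge_a k). Qed.

Lemma Mk_sub k j : Mk (k + j) <= C * Mk k * Mk j.
Proof.
apply: ge_sup; first exact: Mk_ne.
move=> _ [s hs <-]; have [s1 [s2 [h1 h2 ->]]] := in_pow_split hs.
apply: le_trans (hC _ _) _; apply: ler_pM.
- by rewrite mulr_ge0 // ltW.
- exact: ltW.
- by rewrite ler_pM2l //; exact: Mk_ub.
- exact: Mk_ub.
Qed.

Lemma growth_seqE k : (0 < k)%N -> growth_seq w S k = Mk k `^ k%:R^-1.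
Proof.
move=> k0; set r := k%:R^-1.
have r0 : 0 < r by rewrite invr_gt0 ltr0n.
have rk : r * k%:R = 1 by rewrite mulVf // pnatr_eq0 -lt0n.
set E := [set w s `^ r | s in [set s | in_pow S k s]].
have Eub : ubound E (Mk k `^ r).
  move=> _ [s hs <-]; apply: ge0_ler_powR.
  - exact: ltW.
  - by rewrite nnegrE ltW.
  - by rewrite nnegrE ltW // Mk_gt0.
  - exact: Mk_ub.
have Ene : E !=set0 by exists (w 1%g `^ r); exists 1%g => //; exact: in_pow1.
have Ehub : has_ubound E by exists (Mk k `^ r).
rewrite /growth_seq -/r -/E; apply/eqP; rewrite eq_le; apply/andP; split.
  exact: ge_sup.
have sg0 : 0 <= sup E.
  apply: le_trans (ub_le_sup Ehub (_ : E (w 1%g `^ r))); first exact: powR_ge0.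
  by exists 1%g => //; exact: in_pow1.
have hM : Mk k <= sup E `^ k%:R.
  apply: ge_sup; first exact: Mk_ne.
  move=> _ [s hs <-].
  have e : w s = (w s `^ r) `^ k%:R by rewrite -powRrM rk powRr1 // ltW.
  rewrite {1}e; apply: ge0_ler_powR.
  - exact: ler0n.
  - by rewrite nnegrE powR_ge0.
  - by rewrite nnegrE.
  - by apply: ub_le_sup => //; exists s.
apply: le_trans (_ : (sup E `^ k%:R) `^ r <= _).
  apply: ge0_ler_powR.
  - exact: ltW.
  - by rewrite nnegrE ltW // Mk_gt0.
  - by rewrite nnegrE powR_ge0.
  - exact: hM.
by rewrite -powRrM mulrC rk powRr1.
Qed.

Definition C2 := Num.max C 1 / Num.min a 1.

Lemma mina_gt0 : 0 < Num.min a 1.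
Proof. by rewrite lt_min a0 ltr01. Qed.

Lemma C_le_C2 : C <= C2.
Proof.
rewrite /C2 ler_pdivlMr ?mina_gt0 //.
apply: le_trans (_ : C * 1 <= _); first by rewrite ler_pM2l // ge_min lexx orbT.
by rewrite mulr1 le_max lexx.
Qed.

Lemma C2_gt0 : 0 < C2.
Proof. exact: lt_le_trans C0 C_le_C2. Qed.

Lemma C2Mk_ge1 k : 1 <= C2 * Mk k.
Proof.
rewrite /C2 mulrAC ler_pdivlMr ?mina_gt0 // mul1r.
apply: le_trans (_ : a <= _); first by rewrite ge_min lexx.
apply: le_trans (Mk_ge_a k) _.
rewrite ler_peMl ?le_max ?lexx ?orbT //; exact: ltW (Mk_gt0 k).
Qed.

Definition cseq k := ln (C2 * Mk k).

Lemma cseq_ge0 k : 0 <= cseq k.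
Proof. exact: ln_ge0 (C2Mk_ge1 k). Qed.

Lemma cseq_sub k j : cseq (k + j) <= cseq k + cseq j.
Proof.
have q n : C2 * Mk n \is Num.pos by rewrite posrE; exact: mulr_gt0 C2_gt0 (Mk_gt0 n).
have qq : (C2 * Mk k) * (C2 * Mk j) \is Num.pos.
  by rewrite posrE; apply: mulr_gt0; rewrite -posrE.
rewrite /cseq -(lnM (q k) (q j)) (ler_ln (q _) qq).
have h1 := Mk_sub k j; have h2 := C_le_C2.
have h3 := Mk_gt0 k; have h4 := Mk_gt0 j; have h5 := C2_gt0.
have h6 : C * Mk k * Mk j <= C2 * Mk k * Mk j.
  have h7 : 0 < Mk k * Mk j by rewrite mulr_gt0.
  nra.
apply: le_trans (_ : C2 * (C2 * Mk k * Mk j) <= _).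
  rewrite ler_pM2l //; exact: le_trans h1 h6.
by nra.
Qed.

Lemma ln_w_le k s : in_pow S k s -> ln (w s) <= cseq k - ln C2.
Proof.
move=> hs; rewrite /cseq lnM ?posrE ?C2_gt0 ?Mk_gt0 // addrC addKr.
by rewrite ler_ln ?posrE ?Mk_gt0 //; exact: Mk_ub.
Qed.

Lemma growth_seq_exp k : growth_seq w S k = expR (cseq k / k%:R - ln C2 / k%:R).
Proof.
case: k => [|k].
  rewrite /growth_seq !invr0 !mulr0 subr0 expR0.
  have -> : [set w s `^ 0 | s in [set s | in_pow S 0 s]] = [set 1].
    apply/seteqP; split => x /=; first by move=> [s _ <-]; rewrite powRr0.
    by move=> ->; exists 1%g; [exact: in_pow1 | exact: powRr0].
  exact: sup1.
rewrite growth_seqE // /powR gt_eqF ?Mk_gt0 //; congr expR.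
rewrite /cseq lnM ?posrE ?C2_gt0 ?Mk_gt0 //.
by rewrite -mulrBl addrC addKr mulrC.
Qed.

End Growth.

Section Cmp.
Variables (R : realType) (G : groupType).

Lemma Pn_affine (mu : G -> R) (f : G -> R) (c D : R) n : is_prob mu ->
  (forall s, 0 <= f s) -> 0 <= c -> 0 <= D ->
  Pn mu n (fun s => (c * f s + D)%:E) = (c%:E * Pn mu n (fun s => (f s)%:E) + D%:E)%E.
Proof.
move=> hmu f0 c0 D0; have hp := convpow_prob hmu n.
rewrite /Pn.
have -> : (fun s => (c * f s + D)%:E) = (fun s => (c%:E * (f s)%:E) + D%:E)%E.
  by apply: funext => s.
rewrite P_add; try exact: hp.1; try (by move=> s; rewrite -EFinM lee_fin mulr_ge0); try (by move=> s; rewrite lee_fin).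
rewrite P_scale //; try exact: hp.1; try (by rewrite lee_fin); try (by move=> s; rewrite lee_fin).
by rewrite P_cst // lee_fin.
Qed.

Lemma cmp_lim (mu : G -> R) (f1 f2 : G -> R) (c D g1 g2 : R) : is_prob mu ->
  (forall s, 0 <= f1 s) -> (forall s, 0 <= f2 s) -> 0 <= c -> 0 <= D ->
  (forall s, f1 s <= c * f2 s + D) ->
  (forall n, (fine (Pn mu n (fun s => (f1 s)%:E)))%:E = Pn mu n (fun s => (f1 s)%:E)) ->
  (forall n, (fine (Pn mu n (fun s => (f2 s)%:E)))%:E = Pn mu n (fun s => (f2 s)%:E)) ->
  (fun n => fine (Pn mu n (fun s => (f1 s)%:E)) / n%:R) @ \oo --> g1 ->
  (fun n => fine (Pn mu n (fun s => (f2 s)%:E)) / n%:R) @ \oo --> g2 ->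
  g1 <= c * g2.
Proof.
move=> hmu f10 f20 c0 D0 hf fE1 fE2 h1 h2.
have h2' : (fun n => c * (fine (Pn mu n (fun s => (f2 s)%:E)) / n%:R)) @ \oo --> c * g2.
  exact: cvgMl_tmp.
apply: (le_lim_aux h1 h2' (c := D)) => n.
rewrite mulrA -mulrDl; apply: ler_wpM2r; first by rewrite invr_ge0.
rewrite -lee_fin EFinD EFinM fE1 fE2 -Pn_affine //.
by apply: Pn_le => // s; rewrite lee_fin.
Qed.

End Cmp.

Unset Implicit Arguments.
Set Strict Implicit.

Theorem proposition3p3 (R : realType) (G : groupType) (w : G -> R) (mu : G -> R) :
  countable_group G -> is_weight w -> is_prob mu -> finite_log_moment w mu ->
  [/\ (* (i) *) cvgn (ly_seq w mu) /\ 0 <= Ly w mu,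
      (* (ii) *) (forall w' : G -> R, is_weight w' -> equiv_weights w w' ->
                    Ly w' mu = Ly w mu)
    & (* (iii) *) (forall S : seq G, symmetric_gen_set S -> finite_first_moment S mu ->
                    cvgn (ly_seq w mu) /\
                    Ly w mu <= ln (growth_rate w S) * speed S mu)].
Proof.
move=> _ hw hmu hm.
have [K [h [g [K0 hE h0 hsub [fE hg hly g0]]]]] := Ly_main hmu hw hm.
have Lyg : Ly w mu = g by rewrite /Ly (cvg_lim _ hly).
have [[a [a0 ha]] [C [C0 hC]]] := hw.
have wpos s : 0 < w s := lt_le_trans a0 (ha s).
split.
- by split; [exact: cvgP hly | rewrite Lyg].
- move=> w' hw' [c [c' [c0 [c'0 hcc]]]].
  have w'pos s : 0 < w' s by apply: lt_le_trans (hcc s).1; rewrite mulr_gt0.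
  have lo s : ln c + ln (w s) <= ln (w' s).
    by rewrite -lnM ?posrE ?mulr_gt0 // ler_ln ?posrE ?mulr_gt0 //; exact: (hcc s).1.
  have up s : ln (w' s) <= ln c' + ln (w s).
    by rewrite -lnM ?posrE ?mulr_gt0 // ler_ln ?posrE ?mulr_gt0 //; exact: (hcc s).2.
  have hm' : finite_log_moment w' mu.
    rewrite /finite_log_moment.
    apply: (@le_lt_trans _ _ (P mu (fun s => (`|ln (w s)| + (`|ln c| + `|ln c'|))%:E))).
      apply: le_esum => s _; rewrite /= lee_fin; apply: ler_wpM2l; first exact: hmu.1.
      have := lo s; have := up s; have := ler_norm (ln (w s)); have := ler_norm (- ln (w s)).
      have := ler_norm (ln c); have := ler_norm (- ln c); have := ler_norm (ln c').
      have := ler_norm (- ln c'); rewrite !normrN => *.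
      rewrite ler_norml; apply/andP; split; lra.
    rewrite -(Pn1 hmu); last by move=> s; rewrite lee_fin addr_ge0 // addr_ge0.
    rewrite -[X in Pn _ _ X](_ : (fun s => (1 * `|ln (w s)| + (`|ln c| + `|ln c'|))%:E) = _); last first.
      by apply: funext => s; rewrite mul1r.
    rewrite Pn_affine // ?addr_ge0 // mul1e lte_add_pinfty ?ltry // (Pn1 hmu) //.
  have [K' [h' [g' [K0' hE' h0' hsub' [fE' hg' hly' g0']]]]] := Ly_main hmu hw' hm'.
  rewrite /Ly (cvg_lim _ hly') // (cvg_lim _ hly) //.
  apply/eqP; rewrite eq_le; apply/andP; split.
  + rewrite -[g]mul1r; apply: (cmp_lim (D := `|ln c'| + K') hmu h0' h0 ler01 _ _ fE' fE hg' hg).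
      by rewrite addr_ge0.
    move=> s; rewrite hE' hE mul1r; have := up s; have := ler_norm (ln c'); lra.
  + rewrite -[g']mul1r; apply: (cmp_lim (D := `|ln c| + K) hmu h0 h0' ler01 _ _ fE fE' hg hg').
      by rewrite addr_ge0.
    move=> s; rewrite hE' hE mul1r; have := lo s; have := ler_norm (- ln c); rewrite normrN; lra.
- move=> S hS hfm; have [h1S _ hgen] := hS; split; first exact: cvgP hly.
  pose v := fun s => (wordlen S s)%:R : R.
  have v0 s : 0 <= v s by rewrite /v ler0n.
  have vsub s t : v (s * t)%g <= v s + v t.
    by rewrite /v -natrD ler_nat; exact: wordlen_sub hS s t.
  have [l [fEv hv _ l0]] := Pn_seq hmu v0 vsub hfm.
  have speedE : speed S mu = l.
    rewrite /speed.
    have -> : speed_seq S mu = (fun n => fine (Pn mu n (fun s => (v s)%:E)) / n%:R).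
      by apply: funext => n; rewrite /speed_seq mulrC.
    exact: (cvg_lim _ hv).
  have [gam [hc hck gam0]] := fekete (cseq_ge0 a0 ha C0 hC h1S) (cseq_sub a0 ha C0 hC h1S).
  have hcb : (fun k => cseq w S a C k / k%:R - ln (C2 a C) / k%:R) @ \oo --> gam.
    by rewrite -[gam]subr0; apply: cvgB => //; exact: cvg_divn0.
  have hgr : growth_seq w S @ \oo --> expR gam.
    have -> : growth_seq w S = expR \o (fun k => cseq w S a C k / k%:R - ln (C2 a C) / k%:R).
      by apply: funext => k; rewrite /= (growth_seq_exp a0 ha C0 hC h1S).
    apply: continuous_cvg => //; exact: continuous_expR.
  have grE : ln (growth_rate w S) = gam by rewrite /growth_rate (cvg_lim _ hgr) // expRK.
  rewrite Lyg grE speedE.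
  have key k : (0 < k)%N -> g <= cseq w S a C k / k%:R * l.
    move=> k0.
    have [M [M0 HM]] := subadd_lin (cseq_ge0 a0 ha C0 hC h1S) (cseq_sub a0 ha C0 hC h1S) k0.
    have ck0 : 0 <= cseq w S a C k / k%:R by rewrite divr_ge0 // cseq_ge0.
    apply: (cmp_lim (D := M + `|ln (C2 a C)| + K) hmu h0 v0 ck0 _ _ fE fEv hg hv).
      by rewrite !addr_ge0.
    move=> s; rewrite hE.
    have [hs _] := wordlen_spec (hgen s).
    have := ln_w_le a0 ha C0 hC h1S hs.
    have := HM (wordlen S s); have := ler_norm (- ln (C2 a C)); rewrite normrN /v.
    move=> *; rewrite [_ * (wordlen S s)%:R]mulrC; lra.
  have hf : (fun k => cseq w S a C k / k%:R * l) @ \oo --> gam * l.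
    by apply: cvgM => //; exact: cvg_cst.
  rewrite -(cvg_lim _ hf) //; apply: limr_ge; first exact: cvgP hf.
  near=> k; apply: key; near: k; exact: nbhs_infty_gt.
Unshelve. all: end_near.
Qed.
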